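(* With the notation of the context, for every $\Gamma>0$ and all fixed frequencies, $$|B_\Gamma\cap S|\lesssim N_{\min}N_{\rm med};\qquad |B_\Gamma\cap S_k|,\ |B_\Gamma\cap S_{k_i}|\lesssim N_{\rm med}\ (i=1,2,3);\qquad |B_\Gamma\cap S_{kk_2}|,\ |B_\Gamma\cap S_{k_1k_3}|\lesssim N_{\rm med}.$$
   Context: Fix $\alpha\in(1,2)$, dyadic numbers $1\le N_1,N_2,N_3\le N$, a real number $m$ and a constant $C_0>0$. Let $S$ be the set of $(k,k_1,k_2,k_3)\in\mathbb Z^4$ with $k=k_1-k_2+k_3$, $k_2\notin\{k_1,k_3\}$, $\big||k_1|^\alpha-|k_2|^\alpha+|k_3|^\alpha-|k|^\alpha-m\big|\le C_0$, $|k|\le N$ and $|k_j|\le N_j$ for $j=1,2,3$. When some variables are fixed, $S$ with those variables as subscripts denotes the set of remaining variables for which the quadruple lies in $S$ (e.g. $S_{kk_2}=\{(k_1,k_3):(k,k_1,k_2,k_3)\in S\}$); intersections $B_\Gamma\cap S_{\cdots}$ are understood in the same sliced sense. $N_{\max}\ge N_{\rm med}\ge N_{\min}$ denote the decreasing rearrangement of $N_1,N_2,N_3$; fix an index $j_*$ with $N_{j_*}=N_{\max}$ and write $k_{\max}=k_{j_*}$. For $\Gamma>0$, $B_\Gamma=\{(k,k_1,k_2,k_3)\in S:|k_{\max}|\le\Gamma<|k|\}$. $|A|$ is cardinality. $A\lesssim B$ means $A\le CB$ with $C$ depending only on $\alpha$ and $C_0$. *)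

(* Defs.v *)
From Stdlib Require Export Reals ZArith List.
Export ListNotations.
Open Scope R_scope.

(* |x|^alpha with the convention 0^alpha = 0 (alpha > 0). *)
Definition apow (alpha x : R) : R :=
  if Req_EM_T x 0 then 0 else Rpower (Rabs x) alpha.

(* |A| <= b : every duplicate-free finite list of elements of A has length <= b. *)
Definition card_le {T : Type} (A : T -> Prop) (b : R) : Prop :=
  forall l : list T, NoDup l -> (forall x, In x l -> A x) -> INR (length l) <= b.

Definition dyadic (n : Z) : Prop := exists j : nat, n = (2 ^ Z.of_nat j)%Z.

Definition Nmax3 (a b c : Z) : Z := Z.max (Z.max a b) c.
Definition Nmin3 (a b c : Z) : Z := Z.min (Z.min a b) c.
Definition Nmed3 (a b c : Z) : Z := (a + b + c - Nmax3 a b c - Nmin3 a b c)%Z.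

Definition sel3 {T : Type} (j : nat) (a b c : T) : T :=
  match j with 1%nat => a | 2%nat => b | _ => c end.

Definition inS (alpha C0 m : R) (N N1 N2 N3 : Z) (k k1 k2 k3 : Z) : Prop :=
  k = (k1 - k2 + k3)%Z /\ k2 <> k1 /\ k2 <> k3 /\
  Rabs (apow alpha (IZR k1) - apow alpha (IZR k2) + apow alpha (IZR k3)
        - apow alpha (IZR k) - m) <= C0 /\
  (Z.abs k <= N)%Z /\ (Z.abs k1 <= N1)%Z /\ (Z.abs k2 <= N2)%Z /\ (Z.abs k3 <= N3)%Z.

(* membership in B_Gamma, with k_max = k_{jstar} *)
Definition inB (alpha C0 m : R) (N N1 N2 N3 : Z) (jstar : nat) (Gamma : R)
  (k k1 k2 k3 : Z) : Prop :=
  inS alpha C0 m N N1 N2 N3 k k1 k2 k3 /\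
  IZR (Z.abs (sel3 jstar k1 k2 k3)) <= Gamma /\ Gamma < IZR (Z.abs k).

(* Main.v *)
Require Import Defs.
From Stdlib Require Import Reals ZArith List Lra Lia.
Open Scope R_scope.

Lemma rpow_pos : forall x y, 0 < Rpower x y.
Proof. intros; unfold Rpower; apply exp_pos. Qed.

Lemma rpow_1base : forall y, Rpower 1 y = 1.
Proof. intros; unfold Rpower; rewrite ln_1, Rmult_0_r, exp_0; auto. Qed.

Lemma rpow_neg_anti : forall a b p, 0 < a <= b -> p <= 0 -> Rpower b p <= Rpower a p.
Proof.
  intros a b p Hab Hp.
  assert (E : forall x, Rpower x p = / Rpower x (- p)).
  { intros x. rewrite <- Rpower_Ropp. f_equal. ring. }
  rewrite !E.
  apply Rinv_le_contravar. apply rpow_pos.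
  apply Rle_Rpower_l; lra.
Qed.

Lemma rpow_le1 : forall R p, 1 <= R -> p <= 0 -> Rpower R p <= 1.
Proof.
  intros. rewrite <- (rpow_1base p). apply rpow_neg_anti; lra.
Qed.

Lemma rpow_ge1 : forall R p, 1 <= R -> 0 <= p -> 1 <= Rpower R p.
Proof.
  intros. rewrite <- (rpow_1base p). apply Rle_Rpower_l; lra.
Qed.

Lemma pow_incr_lower : forall y a b R, 0 < a -> a <= b -> b <= R -> 0 <= y -> y - 1 <= 0 ->
  Rpower b y - Rpower a y >= y * Rpower R (y - 1) * (b - a).
Proof.
  intros y a b R Ha Hab HbR Hy Hy1.
  destruct (Req_dec a b) as [->|Hne]. { nra. }
  assert (Hlt : a < b) by lra.
  destruct (MVT_cor2 (fun x => Rpower x y) (fun x => y * Rpower x (y - 1)) a b Hlt)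
    as [c [Hc1 Hc2]].
  { intros c Hc. apply derivable_pt_lim_power. lra. }
  rewrite Hc1.
  assert (Rpower R (y - 1) <= Rpower c (y - 1)) by (apply rpow_neg_anti; lra).
  apply Rle_ge. apply Rmult_le_compat_r. lra. apply Rmult_le_compat_l; lra.
Qed.

Lemma G_deriv : forall al mu c, 0 < c ->
  derivable_pt_lim (fun t => Rpower t al - mu / 2 * (t * t)) c
    (al * Rpower c (al - 1) - mu * c).
Proof.
  intros al mu c Hc.
  replace (al * Rpower c (al - 1) - mu * c) with
    (al * Rpower c (al - 1) - (0 * (c * c) + mu / 2 * (1 * c + c * 1))) by field.
  apply (derivable_pt_lim_minus (fun t => Rpower t al) (fun t => mu / 2 * (t * t))).
  apply derivable_pt_lim_power; auto.
  apply (derivable_pt_lim_mult (fun _ => mu / 2) (fun t => t * t)).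
  apply derivable_pt_lim_const.
  apply (derivable_pt_lim_mult (fun t => t) (fun t => t)); apply derivable_pt_lim_id.
Qed.

Lemma sd_pos : forall al R s, 1 < al < 2 -> 1 <= s -> s + 2 <= R ->
  Rpower (s + 2) al - 2 * Rpower (s + 1) al + Rpower s al >= al * (al - 1) * Rpower R (al - 2).
Proof.
  intros al R s Hal Hs HR.
  set (mu := al * (al - 1) * Rpower R (al - 2)).
  set (G := fun t => Rpower t al - mu / 2 * (t * t)).
  set (G' := fun t => al * Rpower t (al - 1) - mu * t).
  assert (Gm : forall a b, 1 <= a -> a <= b -> b <= R -> G' a <= G' b).
  { intros a b Ha Hab Hb. unfold G'.
    pose proof (pow_incr_lower (al - 1) a b R ltac:(lra) Hab Hb ltac:(lra) ltac:(lra)) as H.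
    replace (al - 1 - 1) with (al - 2) in H by ring.
    assert (al * (Rpower b (al - 1) - Rpower a (al - 1)) >= mu * (b - a)).
    { unfold mu. apply Rle_ge.
      replace (al * (al - 1) * Rpower R (al - 2) * (b - a)) with
        (al * ((al - 1) * Rpower R (al - 2) * (b - a))) by ring.
      apply Rmult_le_compat_l; lra. }
    lra. }
  destruct (MVT_cor2 G G' s (s + 1) ltac:(lra)) as [c1 [E1 H1]].
  { intros c Hc. apply G_deriv. lra. }
  destruct (MVT_cor2 G G' (s + 1) (s + 2) ltac:(lra)) as [c2 [E2 H2]].
  { intros c Hc. apply G_deriv. lra. }
  assert (G' c1 <= G' c2) by (apply Gm; lra).
  unfold G in E1, E2.
  replace (s + 1 - s) with 1 in E1 by ring.
  replace (s + 2 - (s + 1)) with 1 in E2 by ring.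
  fold mu. nra.
Qed.

Definition Aa (al : R) (t : Z) : R := apow al (IZR t).

Lemma Aa_nz : forall al t, t <> 0%Z -> Aa al t = Rpower (IZR (Z.abs t)) al.
Proof.
  intros al t Ht. unfold Aa, apow.
  destruct (Req_EM_T (IZR t) 0) as [E|E].
  - apply eq_IZR in E. lia.
  - rewrite abs_IZR. auto.
Qed.

Lemma Aa_0 : forall al, Aa al 0 = 0.
Proof. intros. unfold Aa, apow. destruct (Req_EM_T (IZR 0) 0); auto. lra. Qed.

Lemma Aa_even : forall al t, Aa al (- t) = Aa al t.
Proof.
  intros al t. destruct (Z.eq_dec t 0) as [->|H].
  - reflexivity.
  - rewrite !Aa_nz by lia. f_equal. f_equal. lia.
Qed.

Lemma Aa_nonneg : forall al t, 0 <= Aa al t.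
Proof.
  intros al t. destruct (Z.eq_dec t 0) as [->|H].
  - rewrite Aa_0; lra.
  - rewrite Aa_nz by auto. left; apply rpow_pos.
Qed.

Definition kap (al : R) : R := Rmin (al * (al - 1)) (Rpower 2 al - 2).

Lemma kap_pos : forall al, 1 < al < 2 -> 0 < kap al.
Proof.
  intros al H. unfold kap. apply Rmin_glb_lt. nra.
  assert (Rpower 2 1 < Rpower 2 al) by (apply Rpower_lt; lra).
  rewrite Rpower_1 in H0 by lra. lra.
Qed.

Lemma kap_le2 : forall al, 1 < al < 2 -> kap al <= 2.
Proof.
  intros al H. unfold kap. eapply Rle_trans. apply Rmin_r.
  assert (Rpower 2 al < Rpower 2 2) by (apply Rpower_lt; lra).
  replace 2 with (INR 2) in H0 at 3 by (simpl; ring).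
  rewrite Rpower_pow in H0 by lra. simpl in H0. lra.
Qed.

Lemma sd_int : forall al R s, 1 < al < 2 -> 1 <= R ->
  IZR (Z.abs s) <= R -> IZR (Z.abs (s + 2)) <= R ->
  Aa al (s + 2) - 2 * Aa al (s + 1) + Aa al s >= kap al * Rpower R (al - 2).
Proof.
  intros al R s Hal HR H1 H2.
  assert (Hk := kap_pos al Hal).
  assert (Hk2 := kap_le2 al Hal).
  assert (HRp : Rpower R (al - 2) <= 1) by (apply rpow_le1; lra).
  assert (HRp0 : 0 < Rpower R (al - 2)) by apply rpow_pos.
  assert (Hkm : kap al <= al * (al - 1)) by apply Rmin_l.
  assert (Hk2' : kap al <= Rpower 2 al - 2) by apply Rmin_r.
  assert (Hgen : forall s', (1 <= s')%Z -> IZR (Z.abs (s' + 2)) <= R ->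
     Aa al (s' + 2) - 2 * Aa al (s' + 1) + Aa al s' >= kap al * Rpower R (al - 2)).
  { intros s' Hs' Hb.
    rewrite !Aa_nz by lia.
    rewrite !Z.abs_eq by lia.
    rewrite !plus_IZR.
    pose proof (sd_pos al R (IZR s') Hal) as P.
    rewrite Z.abs_eq in Hb by lia. rewrite plus_IZR in Hb.
    apply IZR_le in Hs'.
    specialize (P Hs' Hb).
    assert (kap al * Rpower R (al - 2) <= al * (al - 1) * Rpower R (al - 2)) by
      (apply Rmult_le_compat_r; lra).
    lra. }
  destruct (Z_lt_le_dec s (-2)) as [Hs|Hs].
  - pose proof (Hgen (- s - 2)%Z ltac:(lia)) as P.
    replace (- s - 2 + 2)%Z with (- s)%Z in P by lia.
    replace (- s - 2 + 1)%Z with (- (s + 1))%Z in P by lia.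
    replace (- s - 2)%Z with (- (s + 2))%Z in P by lia.
    rewrite !Aa_even in P.
    replace (Z.abs (- s)) with (Z.abs s) in P by lia.
    specialize (P H1). lra.
  - destruct (Z_lt_le_dec s 1) as [Hs1|Hs1].
    + assert (Aa al 1 = 1) by (rewrite Aa_nz by lia; simpl; apply rpow_1base).
      assert (Aa al (-1) = 1) by (change (-1)%Z with (Z.opp 1); rewrite Aa_even; auto).
      assert (Aa al 2 = Rpower 2 al) by (rewrite Aa_nz by lia; reflexivity).
      assert (Aa al (-2) = Rpower 2 al) by (change (-2)%Z with (Z.opp 2); rewrite Aa_even; auto).
      assert (kap al * Rpower R (al - 2) <= kap al) by nra.
      assert (s = -2 \/ s = -1 \/ s = 0)%Z as [E|[E|E]] by lia; subst s; simpl;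
        rewrite ?Aa_0; lra.
    + apply Hgen; auto.
Qed.

Lemma mid_bound : forall R a z c, (a <= z <= c)%Z -> IZR (Z.abs a) <= R -> IZR (Z.abs c) <= R ->
  IZR (Z.abs z) <= R.
Proof.
  intros R a z c Hz Ha Hc.
  destruct (Z.le_ge_cases (Z.abs a) (Z.abs c)).
  - eapply Rle_trans; [|exact Hc]. apply IZR_le. lia.
  - eapply Rle_trans; [|exact Ha]. apply IZR_le. lia.
Qed.

Section Conv.
Variables (al R : R).
Hypothesis Hal : 1 < al < 2.
Hypothesis HR : 1 <= R.
Let mu := kap al * Rpower R (al - 2).

Lemma DF : forall (n : nat) a, IZR (Z.abs a) <= R -> IZR (Z.abs (a + Z.of_nat n + 1)) <= R ->
  (Aa al (a + Z.of_nat n + 1) - Aa al (a + Z.of_nat n)) - (Aa al (a + 1) - Aa al a)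
    >= mu * IZR (Z.of_nat n).
Proof.
  induction n as [|n IH]; intros a Ha Hb.
  - simpl. rewrite Z.add_0_r. lra.
  - rewrite Nat2Z.inj_succ in *.
    assert (H1 : IZR (Z.abs (a + Z.of_nat n + 1)) <= R) by
      (apply (mid_bound R a _ (a + Z.succ (Z.of_nat n) + 1)); auto; lia).
    specialize (IH a Ha H1).
    assert (H2 := sd_int al R (a + Z.of_nat n) Hal HR).
    assert (B1 : IZR (Z.abs (a + Z.of_nat n)) <= R) by
      (apply (mid_bound R a _ (a + Z.succ (Z.of_nat n) + 1)); auto; lia).
    assert (B2 : IZR (Z.abs (a + Z.of_nat n + 2)) <= R) by
      (replace (a + Z.of_nat n + 2)%Z with (a + Z.succ (Z.of_nat n) + 1)%Z by lia; auto).
    specialize (H2 B1 B2).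
    replace (a + Z.succ (Z.of_nat n) + 1)%Z with (a + Z.of_nat n + 2)%Z by lia.
    replace (a + Z.succ (Z.of_nat n))%Z with (a + Z.of_nat n + 1)%Z by lia.
    rewrite succ_IZR. unfold mu in *. lra.
Qed.

Lemma CV : forall (e : nat) u u', (u <= u')%Z -> IZR (Z.abs u) <= R ->
  IZR (Z.abs (u' + Z.of_nat e)) <= R ->
  (Aa al (u' + Z.of_nat e) - Aa al u') - (Aa al (u + Z.of_nat e) - Aa al u)
    >= mu * IZR (Z.of_nat e) * IZR (u' - u).
Proof.
  induction e as [|e IH]; intros u u' Hu Ha Hb.
  - simpl. rewrite !Z.add_0_r. lra.
  - rewrite Nat2Z.inj_succ in *.
    assert (H1 : IZR (Z.abs (u' + Z.of_nat e)) <= R) by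
      (apply (mid_bound R u _ (u' + Z.succ (Z.of_nat e))); auto; lia).
    specialize (IH u u' Hu Ha H1).
    destruct (Z.le_exists_sub u u' Hu) as [p [Hpe Hp]].
    pose proof (Z2Nat.id p Hp) as Ep.
    pose proof (DF (Z.to_nat p) (u + Z.of_nat e)) as D.
    rewrite Ep in D.
    replace (u + Z.of_nat e + p)%Z with (u' + Z.of_nat e)%Z in D by lia.
    assert (B1 : IZR (Z.abs (u + Z.of_nat e)) <= R) by
      (apply (mid_bound R u _ (u' + Z.succ (Z.of_nat e))); auto; lia).
    assert (B2 : IZR (Z.abs (u' + Z.of_nat e + 1)) <= R) by
      (replace (u' + Z.of_nat e + 1)%Z with (u' + Z.succ (Z.of_nat e))%Z by lia; auto).
    specialize (D B1 B2).
    replace (u' + Z.succ (Z.of_nat e))%Z with (u' + Z.of_nat e + 1)%Z by lia.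
    replace (u + Z.succ (Z.of_nat e))%Z with (u + Z.of_nat e + 1)%Z by lia.
    replace (u' - u)%Z with p in * by lia.
    rewrite succ_IZR. unfold mu in *. nra.
Qed.

End Conv.

Lemma card_le_mono : forall {T} (A B : T -> Prop) b,
  (forall x, A x -> B x) -> card_le B b -> card_le A b.
Proof. intros T A B b H HB l Hl Hin. apply HB; auto. Qed.

Lemma card_le_weaken : forall {T} (A : T -> Prop) b b', b <= b' -> card_le A b -> card_le A b'.
Proof. intros T A b b' H HA l Hl Hin. specialize (HA l Hl Hin). lra. Qed.

Lemma card_le_inj : forall {T U} (A : T -> Prop) (B : U -> Prop) (f : T -> U) b,
  (forall x, A x -> B (f x)) ->
  (forall x y, A x -> A y -> f x = f y -> x = y) ->
  card_le B b -> card_le A b.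
Proof.
  intros T U A B f b HAB Hinj HB l Hl Hin.
  rewrite <- (length_map f l).
  apply HB.
  - apply NoDup_map_NoDup_ForallPairs; auto.
    intros x y Hx Hy. apply Hinj; auto.
  - intros y Hy. apply in_map_iff in Hy. destruct Hy as [x [<- Hx]]. auto.
Qed.

Definition zints (lo : Z) (n : nat) : list Z := map (fun i => (lo + Z.of_nat i)%Z) (seq 0 n).

Lemma in_zints : forall lo n z, In z (zints lo n) <-> (lo <= z < lo + Z.of_nat n)%Z.
Proof.
  intros lo n z. unfold zints. rewrite in_map_iff. split.
  - intros [i [<- Hi]]. apply in_seq in Hi. lia.
  - intros H. exists (Z.to_nat (z - lo)). split. rewrite Z2Nat.id; lia.
    apply in_seq. lia.
Qed.

Lemma card_le_list : forall (vs : list Z), card_le (fun z => In z vs) (INR (length vs)).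
Proof.
  intros vs l Hl Hin. apply le_INR. apply NoDup_incl_length; auto.
Qed.

Lemma card_le_interval : forall lo hi, (lo <= hi + 1)%Z ->
  card_le (fun z : Z => (lo <= z <= hi)%Z) (IZR (hi - lo + 1)).
Proof.
  intros lo hi H.
  eapply card_le_mono with (B := fun z => In z (zints lo (Z.to_nat (hi - lo + 1)))).
  - intros z Hz. apply in_zints. lia.
  - intros l Hl Hin. pose proof (card_le_list _ l Hl Hin) as P.
    unfold zints in P. rewrite length_map, length_seq in P.
    rewrite (INR_IZR_INZ (Z.to_nat _)), Z2Nat.id in P by lia. exact P.
Qed.

Lemma list_min : forall (l : list Z), l <> nil -> exists a, In a l /\ forall y, In y l -> (a <= y)%Z.
Proof.
  induction l as [|x l IH]; intros H. congruence.
  destruct l as [|x' l'].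
  - exists x. split. left; auto. intros y [<-|[]]. lia.
  - destruct (IH ltac:(discriminate)) as [a [Ha Hm]].
    destruct (Z.le_gt_cases x a).
    + exists x. split. left; auto. intros y [<-|Hy]. lia. specialize (Hm y Hy). lia.
    + exists a. split. right; auto. intros y [<-|Hy]. lia. auto.
Qed.

Lemma list_max : forall (l : list Z), l <> nil -> exists a, In a l /\ forall y, In y l -> (y <= a)%Z.
Proof.
  induction l as [|x l IH]; intros H. congruence.
  destruct l as [|x' l'].
  - exists x. split. left; auto. intros y [<-|[]]. lia.
  - destruct (IH ltac:(discriminate)) as [a [Ha Hm]].
    destruct (Z.le_gt_cases a x).
    + exists x. split. left; auto. intros y [<-|Hy]. lia. specialize (Hm y Hy). lia.
    + exists a. split. right; auto. intros y [<-|Hy]. lia. auto.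
Qed.

Lemma card_gap : forall (T : Z -> Prop) (g : Z -> R) d0 w, 0 < d0 -> 0 <= w ->
  (forall t t', T t -> T t' -> (t < t')%Z -> d0 * IZR (t' - t) <= Rabs (g t' - g t)) ->
  (forall t t', T t -> T t' -> Rabs (g t' - g t) <= w) ->
  card_le T (1 + w / d0).
Proof.
  intros T g d0 w Hd Hw Hgap Hwin l Hl Hin.
  destruct l as [|x l'] eqn:El.
  - simpl. assert (0 <= w / d0) by (unfold Rdiv; apply Rmult_le_pos; [lra|left; apply Rinv_0_lt_compat; lra]). lra.
  - rewrite <- El in *.
    assert (Hne : l <> nil) by (subst; discriminate).
    destruct (list_min l Hne) as [a [Ha Hma]].
    destruct (list_max l Hne) as [b [Hb Hmb]].
    assert (Hab : (a <= b)%Z) by (apply Hma; auto).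
    assert (Hlen : INR (length l) <= IZR (b - a + 1)).
    { apply (card_le_interval a b ltac:(lia)); auto. }
    destruct (Z.eq_dec a b) as [->|Hneq].
    + replace (b - b + 1)%Z with 1%Z in Hlen by lia.
      assert (0 <= w / d0) by (unfold Rdiv; apply Rmult_le_pos; [lra|left; apply Rinv_0_lt_compat; lra]). simpl in Hlen. lra.
    + assert (G := Hgap a b (Hin a Ha) (Hin b Hb) ltac:(lia)).
      assert (W := Hwin a b (Hin a Ha) (Hin b Hb)).
      assert (IZR (b - a) <= w / d0).
      { apply (Rmult_le_reg_l d0); auto. unfold Rdiv. rewrite <- Rmult_assoc.
        rewrite (Rmult_comm d0 w), Rmult_assoc, Rinv_r by lra. lra. }
      rewrite plus_IZR in Hlen. lra.
Qed.

Fixpoint sumR (f : Z -> R) (l : list Z) : R :=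
  match l with nil => 0 | v :: l' => f v + sumR f l' end.

Lemma card_fiber : forall {T} (A : T -> Prop) (o : T -> Z) (vs : list Z) (b : Z -> R),
  (forall q, A q -> In (o q) vs) ->
  (forall v, card_le (fun q => A q /\ o q = v) (b v)) ->
  card_le A (sumR b vs).
Proof.
  intros T A o vs. revert A. induction vs as [|v vs IH]; intros A b Hin Hb l Hl HlA.
  - destruct l as [|x l']. simpl; lra. exfalso. apply (Hin x). apply HlA. left; auto.
  - simpl.
    set (l1 := filter (fun q => Z.eqb (o q) v) l).
    set (l2 := filter (fun q => negb (Z.eqb (o q) v)) l).
    assert (Hlen : length l = (length l1 + length l2)%nat).
    { unfold l1, l2. clear. induction l as [|x l IH]; simpl; auto.
      destruct (Z.eqb (o x) v); simpl; lia. }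
    rewrite Hlen, plus_INR.
    assert (H1 : INR (length l1) <= b v).
    { apply Hb. apply NoDup_filter; auto.
      intros q Hq. unfold l1 in Hq. apply filter_In in Hq. destruct Hq as [Hq1 Hq2].
      split; auto. apply Z.eqb_eq; auto. }
    assert (H2 : INR (length l2) <= sumR b vs).
    { apply (IH (fun q => A q /\ o q <> v) b).
      - intros q [Hq1 Hq2]. destruct (Hin q Hq1) as [E|E]; auto. congruence.
      - intros w. apply card_le_mono with (B := fun q => A q /\ o q = w); [tauto|]. apply Hb.
      - apply NoDup_filter; auto.
      - intros q Hq. unfold l2 in Hq. apply filter_In in Hq. destruct Hq as [Hq1 Hq2].
        split; auto. apply Z.eqb_neq. destruct (Z.eqb (o q) v); simpl in Hq2; congruence. }
    lra.
Qed.

Lemma card_le_empty : forall {T} (A : T -> Prop) b, (forall x, ~ A x) -> 0 <= b -> card_le A b.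
Proof.
  intros T A b H Hb l Hl Hin. destruct l as [|x l']. simpl; lra.
  exfalso. apply (H x). apply Hin. left; auto.
Qed.

Lemma rabs_le_e : forall x a, Rabs x <= a -> - a <= x <= a.
Proof. intros x a H. unfold Rabs in H. destruct (Rcase_abs x); lra. Qed.

Definition mu (al R : R) := kap al * Rpower R (al - 2).

Lemma mu_pos : forall al R, 1 < al < 2 -> 0 < mu al R.
Proof. intros. unfold mu. apply Rmult_lt_0_compat. apply kap_pos; auto. apply rpow_pos. Qed.

Lemma inner_count : forall al C0 R d H, 1 < al < 2 -> 0 < C0 -> 1 <= R -> d <> 0%Z ->
  card_le (fun t => IZR (Z.abs t) <= R /\ IZR (Z.abs (t + d)) <= R /\
                    Rabs (Aa al (t + d) - Aa al t - H) <= C0)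
    (1 + 2 * C0 / (mu al R * IZR (Z.abs d))).
Proof.
  intros al C0 R d H Hal HC0 HR Hd.
  assert (Hmu := mu_pos al R Hal).
  assert (Hd' : 0 < IZR (Z.abs d)) by (apply IZR_lt; lia).
  apply (card_gap _ (fun t => Aa al (t + d) - Aa al t)).
  - apply Rmult_lt_0_compat; auto.
  - lra.
  - intros t t' [B1 [B2 _]] [B3 [B4 _]] Htt.
    destruct (Z_lt_le_dec 0 d) as [Dp|Dn].
    + pose proof (CV al R Hal HR (Z.to_nat d) t t' ltac:(lia) B1) as P.
      rewrite Z2Nat.id in P by lia. specialize (P B4).
      rewrite Z.abs_eq by lia. unfold mu.
      assert (0 <= IZR (t' - t)) by (apply IZR_le; lia).
      rewrite Rabs_right. lra. 
      assert (0 <= kap al * Rpower R (al - 2) * IZR d * IZR (t' - t)).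
      { apply Rmult_le_pos; auto. apply Rmult_le_pos. left; exact Hmu. apply IZR_le; lia. }
      lra.
    + pose proof (CV al R Hal HR (Z.to_nat (- d)) (t + d) (t' + d) ltac:(lia) B2) as P.
      rewrite Z2Nat.id in P by lia.
      replace (t' + d + - d)%Z with t' in P by lia.
      replace (t + d + - d)%Z with t in P by lia.
      replace (t' + d - (t + d))%Z with (t' - t)%Z in P by lia.
      specialize (P B3).
      rewrite Z.abs_neq by lia. unfold mu.
      assert (0 <= IZR (t' - t)) by (apply IZR_le; lia).
      assert (0 <= kap al * Rpower R (al - 2) * IZR (- d) * IZR (t' - t)).
      { apply Rmult_le_pos; auto. apply Rmult_le_pos. left; exact Hmu. apply IZR_le; lia. }
      rewrite Rabs_left1. lra. lra.
  - intros t t' [_ [_ W1]] [_ [_ W2]].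
    apply Rabs_le. apply rabs_le_e in W1. apply rabs_le_e in W2. lra.
Qed.

Lemma slice_count : forall {T} (A : T -> Prop) (o q2 : T -> Z) (dl : Z -> Z) (Hf : Z -> R)
  (vs : list Z) al C0 R, 1 < al < 2 -> 0 < C0 -> 1 <= R ->
  (forall q, A q -> In (o q) vs /\ dl (o q) <> 0%Z /\ IZR (Z.abs (q2 q)) <= R /\
     IZR (Z.abs (q2 q + dl (o q))) <= R /\
     Rabs (Aa al (q2 q + dl (o q)) - Aa al (q2 q) - Hf (o q)) <= C0) ->
  (forall q q', A q -> A q' -> o q = o q' -> q2 q = q2 q' -> q = q') ->
  card_le A (sumR (fun v => 1 + 2 * C0 / (mu al R * IZR (Z.abs (dl v)))) vs).
Proof.
  intros T A o q2 dl Hf vs al C0 R Hal HC0 HR Hall Hinj.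
  apply (card_fiber A o vs).
  - intros q Hq. apply Hall; auto.
  - intros v. destruct (Z.eq_dec (dl v) 0) as [E|E].
    + apply card_le_empty.
      * intros q [Hq Hov]. destruct (Hall q Hq) as [_ [Hd _]]. congruence.
      * rewrite E. simpl. rewrite Rmult_0_r. unfold Rdiv. rewrite Rinv_0. lra.
    + eapply (card_le_inj _ _ q2); [| |exact (inner_count al C0 R (dl v) (Hf v) Hal HC0 HR E)].
      * intros q [Hq Hov]. destruct (Hall q Hq) as [_ [_ [B1 [B2 B3]]]].
        subst v. simpl. auto.
      * intros q q' [Hq Hov] [Hq' Hov'] E2. apply Hinj; auto. congruence.
Qed.

Fixpoint symlist (n : nat) : list Z :=
  match n with O => 0%Z :: nil | S n' => Z.of_nat n :: (- Z.of_nat n)%Z :: symlist n' end.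

Lemma in_symlist : forall n v, (Z.abs v <= Z.of_nat n)%Z -> In v (symlist n).
Proof.
  induction n as [|n IH]; intros v Hv; simpl.
  - left; lia.
  - destruct (Z.eq_dec v (Z.of_nat (S n))) as [E|E]. left; auto.
    destruct (Z.eq_dec v (- Z.of_nat (S n))) as [E'|E']. right; left; auto.
    right; right. apply IH. rewrite Nat2Z.inj_succ in *. lia.
Qed.

Lemma rpow_step : forall al (n : R), 1 < al < 2 -> 1 <= n ->
  Rpower n (al - 1) + (al - 1) / (n + 1) <= Rpower (n + 1) (al - 1).
Proof.
  intros al n Hal Hn.
  pose proof (pow_incr_lower (al - 1) n (n + 1) (n + 1) ltac:(lra) ltac:(lra) ltac:(lra)
    ltac:(lra) ltac:(lra)) as P.
  replace (al - 1 - 1) with (al - 2) in P by ring.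
  assert (E : Rpower (n + 1) (al - 2) * (n + 1) = Rpower (n + 1) (al - 1)).
  { rewrite <- (Rpower_1 (n + 1)) at 2 by lra. rewrite <- Rpower_plus. f_equal; ring. }
  assert (G1 : 1 <= Rpower (n + 1) (al - 1)) by (apply rpow_ge1; lra).
  assert (G2 : / (n + 1) <= Rpower (n + 1) (al - 2)).
  { apply (Rmult_le_reg_r (n + 1)). lra. rewrite Rinv_l by lra. lra. }
  unfold Rdiv. replace (n + 1 - n) with 1 in P by ring.
  assert ((al - 1) * / (n + 1) <= (al - 1) * Rpower (n + 1) (al - 2)) by
    (apply Rmult_le_compat_l; lra).
  lra.
Qed.

Lemma sum_sym : forall al W (n : nat), 1 < al < 2 -> 0 <= W -> (1 <= n)%nat ->
  sumR (fun v => 1 + W / IZR (Z.abs v)) (symlist n) <=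
    2 * INR n + 1 + 2 * W / (al - 1) * Rpower (INR n) (al - 1).
Proof.
  intros al W n Hal HW Hn.
  induction n as [|n IH]. lia.
  assert (Hinv : W <= W / (al - 1)).
  { unfold Rdiv. rewrite <- (Rmult_1_r W) at 1. apply Rmult_le_compat_l; auto.
    rewrite <- Rinv_1. apply Rinv_le_contravar; lra. }
  destruct n as [|n].
  - simpl. replace (Z.abs (-1)) with 1%Z by reflexivity. simpl.
    rewrite rpow_1base. unfold Rdiv. rewrite Rinv_0, Rinv_1. lra.
  - specialize (IH ltac:(lia)).
    change (symlist (S (S n))) with (Z.of_nat (S (S n)) :: (- Z.of_nat (S (S n)))%Z :: symlist (S n)).
    cbn [sumR].
    rewrite Z.abs_opp, Z.abs_eq by lia. rewrite <- INR_IZR_INZ.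
    rewrite (S_INR (S n)).
    pose proof (rpow_step al (INR (S n)) Hal) as P.
    assert (1 <= INR (S n)) by (rewrite S_INR; pose proof (pos_INR n); lra).
    specialize (P H).
    assert (HW' : 0 <= 2 * W / (al - 1)) by (unfold Rdiv; apply Rmult_le_pos; [lra|left; apply Rinv_0_lt_compat; lra]).
    assert (2 * W / (al - 1) * (Rpower (INR (S n)) (al - 1) + (al - 1) / (INR (S n) + 1))
            <= 2 * W / (al - 1) * Rpower (INR (S n) + 1) (al - 1)) by
      (apply Rmult_le_compat_l; auto).
    assert (E : 2 * W / (al - 1) * ((al - 1) / (INR (S n) + 1)) = 2 * (W / (INR (S n) + 1))).
    { field. split; lra. }
    nra.
Qed.

Lemma sumR_ext : forall f g l, (forall v, f v = g v) -> sumR f l = sumR g l.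
Proof. intros f g l H. induction l; simpl; auto. rewrite H, IHl; auto. Qed.

Lemma sumR_le : forall f l K, (forall v, In v l -> f v <= K) -> sumR f l <= K * INR (length l).
Proof.
  intros f l K H. induction l as [|v l IH]. simpl; lra. simpl sumR.
  change (length (v :: l)) with (S (length l)). rewrite S_INR. assert (f v <= K) by (apply H; left; auto).
  assert (sumR f l <= K * INR (length l)) by (apply IH; intros; apply H; right; auto).
  lra.
Qed.

Definition KA (al C0 : R) := 41 + 80 * C0 / (kap al * (al - 1)).
Definition KB (al C0 : R) := 18 * (1 + 8 * C0 / kap al).

Lemma sumA : forall al C0 M, 1 < al < 2 -> 0 < C0 -> (1 <= M)%Z ->
  sumR (fun v => 1 + 2 * C0 / (mu al (IZR (10 * M)) * IZR (Z.abs v)))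
       (symlist (Z.to_nat (20 * M))) <= KA al C0 * IZR M.
Proof.
  intros al C0 M Hal HC0 HM.
  assert (Hk := kap_pos al Hal).
  set (R := IZR (10 * M)).
  set (W := 2 * C0 / mu al R).
  assert (HmuR := mu_pos al R Hal).
  rewrite (sumR_ext _ (fun v => 1 + W / IZR (Z.abs v))).
  2:{ intros v. unfold W. destruct (Z.eq_dec v 0) as [->|E].
      - simpl. rewrite Rmult_0_r. unfold Rdiv. rewrite !Rinv_0. ring.
      - field. split; try lra; apply not_0_IZR; lia. }
  assert (HW : 0 <= W) by (unfold W; unfold Rdiv; apply Rmult_le_pos; [lra|left; apply Rinv_0_lt_compat; auto]).
  eapply Rle_trans. apply (sum_sym al); auto. lia.
  rewrite INR_IZR_INZ, Z2Nat.id by lia.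
  set (D := IZR (20 * M)).
  assert (HD : 20 <= D) by (unfold D; rewrite mult_IZR; apply IZR_le in HM; lra).
  assert (HR : 10 <= R) by (unfold R; rewrite mult_IZR; apply IZR_le in HM; lra).
  assert (HRD : R <= D) by (unfold R, D; rewrite !mult_IZR; apply IZR_le in HM; lra).
  assert (EDM : D = 20 * IZR M) by (unfold D; rewrite mult_IZR; ring).
  assert (HWD : W * Rpower D (al - 1) <= 2 * C0 / kap al * D).
  { unfold W, mu.
    assert (A1 : Rpower D (al - 2) <= Rpower R (al - 2)) by (apply rpow_neg_anti; lra).
    assert (A2 : Rpower D (al - 1) = Rpower D (al - 2) * D).
    { rewrite <- (Rpower_1 D) at 3 by lra. rewrite <- Rpower_plus. f_equal; ring. }
    assert (P1 : 0 < Rpower D (al - 2)) by apply rpow_pos.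
    assert (P2 : 0 < Rpower R (al - 2)) by apply rpow_pos.
    rewrite A2.
    replace (2 * C0 / (kap al * Rpower R (al - 2)) * (Rpower D (al - 2) * D)) with
      (2 * C0 / kap al * D * (Rpower D (al - 2) / Rpower R (al - 2))) by (field; lra).
    assert (Rpower D (al - 2) / Rpower R (al - 2) <= 1).
    { apply (Rmult_le_reg_r (Rpower R (al - 2))); auto. unfold Rdiv.
      rewrite Rmult_assoc, Rinv_l by lra. lra. }
    assert (0 <= 2 * C0 / kap al * D).
    { unfold Rdiv. apply Rmult_le_pos; [|lra]. apply Rmult_le_pos. lra. left; apply Rinv_0_lt_compat; lra. }
    nra. }
  unfold KA.
  assert (IM : 1 <= IZR M) by (apply IZR_le in HM; lra).
  replace (2 * W / (al - 1) * Rpower D (al - 1)) with (2 / (al - 1) * (W * Rpower D (al - 1))) by (field; lra).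
  assert (2 / (al - 1) * (W * Rpower D (al - 1)) <= 2 / (al - 1) * (2 * C0 / kap al * D)).
  { apply Rmult_le_compat_l; auto. unfold Rdiv. apply Rmult_le_pos. lra. left; apply Rinv_0_lt_compat; lra. }
  assert (E2 : 2 / (al - 1) * (2 * C0 / kap al * D) = 80 * C0 / (kap al * (al - 1)) * IZR M).
  { rewrite EDM. field. split; lra. }
  lra.
Qed.

Lemma sumB : forall al C0 M G, 1 < al < 2 -> 0 < C0 -> (1 <= M)%Z -> (8 * M <= G)%Z ->
  sumR (fun v => 1 + 2 * C0 / (mu al (IZR (G + 4 * M)) * IZR (Z.abs v)))
       (zints (G - 4 * M) (Z.to_nat (8 * M + 1)) ++ zints (- (G + 4 * M)) (Z.to_nat (8 * M + 1)))
    <= KB al C0 * IZR M.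
Proof.
  intros al C0 M G Hal HC0 HM HG.
  assert (Hk := kap_pos al Hal).
  set (R := IZR (G + 4 * M)).
  assert (IM : 1 <= IZR M) by (apply IZR_le in HM; lra).
  assert (IG : 8 * IZR M <= IZR G) by (apply IZR_le in HG; rewrite mult_IZR in HG; lra).
  assert (HR : R <= 2 * IZR G) by (unfold R; rewrite plus_IZR, mult_IZR; lra).
  assert (HG1 : 1 <= IZR G) by lra.
  assert (HR0 : 1 <= R) by (unfold R; rewrite plus_IZR, mult_IZR; lra).
  assert (Key : forall v, IZR G / 2 <= v -> kap al / 4 <= mu al R * v).
  { intros v Hv. unfold mu.
    assert (A1 : Rpower (2 * IZR G) (al - 2) <= Rpower R (al - 2)) by (apply rpow_neg_anti; lra).
    assert (A2 : Rpower (2 * IZR G) (al - 2) = Rpower 2 (al - 2) * Rpower (IZR G) (al - 2)) by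
      (rewrite Rpower_mult_distr; auto; lra).
    assert (A3 : / 2 <= Rpower 2 (al - 2)).
    { assert (E : Rpower 2 (Ropp 1) = / 2) by (rewrite Rpower_Ropp, Rpower_1; lra).
      rewrite <- E. apply Rle_Rpower; lra. }
    assert (A4 : Rpower (IZR G) (al - 2) * IZR G = Rpower (IZR G) (al - 1)).
    { rewrite <- (Rpower_1 (IZR G)) at 2 by lra. rewrite <- Rpower_plus. f_equal; ring. }
    assert (A5 : 1 <= Rpower (IZR G) (al - 1)) by (apply rpow_ge1; lra).
    assert (P1 : 0 < Rpower (IZR G) (al - 2)) by apply rpow_pos.
    assert (P2 : 0 < Rpower 2 (al - 2)) by apply rpow_pos.
    assert (A6 : / 4 <= Rpower (2 * IZR G) (al - 2) * (IZR G / 2)).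
    { rewrite A2. replace (Rpower 2 (al - 2) * Rpower (IZR G) (al - 2) * (IZR G / 2)) with
        (Rpower 2 (al - 2) / 2 * (Rpower (IZR G) (al - 2) * IZR G)) by field.
      rewrite A4. nra. }
    assert (Rpower (2 * IZR G) (al - 2) * (IZR G / 2) <= Rpower R (al - 2) * v).
    { apply Rmult_le_compat; try lra. left; apply rpow_pos. }
    assert (kap al * / 4 <= kap al * (Rpower R (al - 2) * v)) by (apply Rmult_le_compat_l; lra).
    lra. }
  eapply Rle_trans. apply (sumR_le _ _ (1 + 8 * C0 / kap al)).
  - intros v Hv. apply in_app_iff in Hv. rewrite !in_zints in Hv.
    assert (Hv' : IZR G / 2 <= IZR (Z.abs v)).
    { assert (2 * Z.abs v >= G)%Z by (rewrite Z2Nat.id in Hv by lia; lia).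
      apply Rle_ge in IG. apply Rge_le. 
      assert (IZR (2 * Z.abs v) >= IZR G) by (apply Rle_ge, IZR_le; lia).
      rewrite mult_IZR in H0. lra. }
    specialize (Key _ Hv').
    assert (Hpos : 0 < mu al R * IZR (Z.abs v)) by lra.
    assert (2 * C0 / (mu al R * IZR (Z.abs v)) <= 8 * C0 / kap al).
    { unfold Rdiv. apply (Rmult_le_reg_r (mu al R * IZR (Z.abs v))); auto.
      rewrite Rmult_assoc, Rinv_l by lra.
      apply (Rmult_le_reg_r (kap al)); auto.
      replace (8 * C0 * / kap al * (mu al R * IZR (Z.abs v)) * kap al) with
        (8 * C0 * (mu al R * IZR (Z.abs v))) by (field; lra).
      nra. }
    lra.
  - rewrite length_app. unfold zints. rewrite !length_map, !length_seq.
    rewrite plus_INR, INR_IZR_INZ, Z2Nat.id by lia. rewrite plus_IZR, mult_IZR.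
    unfold KB.
    assert (0 <= 8 * C0 / kap al) by (unfold Rdiv; apply Rmult_le_pos; [lra|left; apply Rinv_0_lt_compat; lra]).
    nra.
Qed.

Section Slices.
Variables (al C0 m R : R) (Q : Z -> Z -> Z -> Z -> Prop) (vs : list Z).
Hypothesis Hal : 1 < al < 2.
Hypothesis HC0 : 0 < C0.
Hypothesis HR : 1 <= R.
Hypothesis HQ : forall k k1 k2 k3, Q k k1 k2 k3 -> k = (k1 - k2 + k3)%Z /\
  Rabs (Aa al k1 - Aa al k2 + Aa al k3 - Aa al k - m) <= C0.

Let bnd := fun v => 1 + 2 * C0 / (mu al R * IZR (Z.abs v)).

Lemma slice_k_I : forall k,
  (forall k1 k2 k3, Q k k1 k2 k3 -> In (k - k1)%Z vs /\ (k - k1 <> 0)%Z /\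
     IZR (Z.abs k2) <= R /\ IZR (Z.abs k3) <= R) ->
  card_le (fun q : Z * Z * Z => let '(k1, k2, k3) := q in Q k k1 k2 k3) (sumR bnd vs).
Proof.
  intros k Hc.
  apply (slice_count _ (fun q => let '(k1, _, _) := q in (k - k1)%Z)
     (fun q => let '(_, k2, _) := q in k2) (fun v => v) (fun v => m - Aa al (k - v) + Aa al k)
     vs al C0 R Hal HC0 HR).
  - intros [[k1 k2] k3] Hq. destruct (HQ _ _ _ _ Hq) as [E P].
    destruct (Hc _ _ _ Hq) as [H1 [H2 [H3 H4]]].
    replace (k2 + (k - k1))%Z with k3 by lia. replace (k - (k - k1))%Z with k1 by lia.
    repeat split; auto. replace (Aa al k3 - Aa al k2 - (m - Aa al k1 + Aa al k)) with
      (Aa al k1 - Aa al k2 + Aa al k3 - Aa al k - m) by ring. auto.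
  - intros [[k1 k2] k3] [[k1' k2'] k3'] Hq Hq' E1 E2.
    destruct (HQ _ _ _ _ Hq) as [E _]. destruct (HQ _ _ _ _ Hq') as [E' _].
    f_equal; [f_equal|]; lia.
Qed.

Lemma slice_k_II : forall k,
  (forall k1 k2 k3, Q k k1 k2 k3 -> In (k - k3)%Z vs /\ (k - k3 <> 0)%Z /\
     IZR (Z.abs k2) <= R /\ IZR (Z.abs k1) <= R) ->
  card_le (fun q : Z * Z * Z => let '(k1, k2, k3) := q in Q k k1 k2 k3) (sumR bnd vs).
Proof.
  intros k Hc.
  apply (slice_count _ (fun q => let '(_, _, k3) := q in (k - k3)%Z)
     (fun q => let '(_, k2, _) := q in k2) (fun v => v) (fun v => m - Aa al (k - v) + Aa al k)
     vs al C0 R Hal HC0 HR).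
  - intros [[k1 k2] k3] Hq. destruct (HQ _ _ _ _ Hq) as [E P].
    destruct (Hc _ _ _ Hq) as [H1 [H2 [H3 H4]]].
    replace (k2 + (k - k3))%Z with k1 by lia. replace (k - (k - k3))%Z with k3 by lia.
    repeat split; auto. replace (Aa al k1 - Aa al k2 - (m - Aa al k3 + Aa al k)) with
      (Aa al k1 - Aa al k2 + Aa al k3 - Aa al k - m) by ring. auto.
  - intros [[k1 k2] k3] [[k1' k2'] k3'] Hq Hq' E1 E2.
    destruct (HQ _ _ _ _ Hq) as [E _]. destruct (HQ _ _ _ _ Hq') as [E' _].
    f_equal; [f_equal|]; lia.
Qed.

Lemma slice_k1_I : forall k1,
  (forall k k2 k3, Q k k1 k2 k3 -> In (k - k1)%Z vs /\ (k - k1 <> 0)%Z /\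
     IZR (Z.abs k2) <= R /\ IZR (Z.abs k3) <= R) ->
  card_le (fun q : Z * Z * Z => let '(k, k2, k3) := q in Q k k1 k2 k3) (sumR bnd vs).
Proof.
  intros k1 Hc.
  apply (slice_count _ (fun q => let '(k, _, _) := q in (k - k1)%Z)
     (fun q => let '(_, k2, _) := q in k2) (fun v => v) (fun v => m - Aa al k1 + Aa al (k1 + v))
     vs al C0 R Hal HC0 HR).
  - intros [[k k2] k3] Hq. destruct (HQ _ _ _ _ Hq) as [E P].
    destruct (Hc _ _ _ Hq) as [H1 [H2 [H3 H4]]].
    replace (k2 + (k - k1))%Z with k3 by lia. replace (k1 + (k - k1))%Z with k by lia.
    repeat split; auto. replace (Aa al k3 - Aa al k2 - (m - Aa al k1 + Aa al k)) with
      (Aa al k1 - Aa al k2 + Aa al k3 - Aa al k - m) by ring. auto.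
  - intros [[k k2] k3] [[k' k2'] k3'] Hq Hq' E1 E2.
    destruct (HQ _ _ _ _ Hq) as [E _]. destruct (HQ _ _ _ _ Hq') as [E' _].
    f_equal; [f_equal|]; lia.
Qed.

Lemma slice_k3_II : forall k3,
  (forall k k1 k2, Q k k1 k2 k3 -> In (k - k3)%Z vs /\ (k - k3 <> 0)%Z /\
     IZR (Z.abs k2) <= R /\ IZR (Z.abs k1) <= R) ->
  card_le (fun q : Z * Z * Z => let '(k, k1, k2) := q in Q k k1 k2 k3) (sumR bnd vs).
Proof.
  intros k3 Hc.
  apply (slice_count _ (fun q => let '(k, _, _) := q in (k - k3)%Z)
     (fun q => let '(_, _, k2) := q in k2) (fun v => v) (fun v => m - Aa al k3 + Aa al (k3 + v))
     vs al C0 R Hal HC0 HR).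
  - intros [[k k1] k2] Hq. destruct (HQ _ _ _ _ Hq) as [E P].
    destruct (Hc _ _ _ Hq) as [H1 [H2 [H3 H4]]].
    replace (k2 + (k - k3))%Z with k1 by lia. replace (k3 + (k - k3))%Z with k by lia.
    repeat split; auto. replace (Aa al k1 - Aa al k2 - (m - Aa al k3 + Aa al k)) with
      (Aa al k1 - Aa al k2 + Aa al k3 - Aa al k - m) by ring. auto.
  - intros [[k k1] k2] [[k' k1'] k2'] Hq Hq' E1 E2.
    destruct (HQ _ _ _ _ Hq) as [E _]. destruct (HQ _ _ _ _ Hq') as [E' _].
    f_equal; [f_equal|]; lia.
Qed.

Lemma slice_k2_I : forall k2,
  (forall k k1 k3, Q k k1 k2 k3 -> In (k2 - k3)%Z vs /\ (k2 - k3 <> 0)%Z /\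
     IZR (Z.abs k) <= R /\ IZR (Z.abs k1) <= R) ->
  card_le (fun q : Z * Z * Z => let '(k, k1, k3) := q in Q k k1 k2 k3) (sumR bnd vs).
Proof.
  intros k2 Hc.
  apply (slice_count _ (fun q => let '(_, _, k3) := q in (k2 - k3)%Z)
     (fun q => let '(k, _, _) := q in k) (fun v => v) (fun v => m - Aa al (k2 - v) + Aa al k2)
     vs al C0 R Hal HC0 HR).
  - intros [[k k1] k3] Hq. destruct (HQ _ _ _ _ Hq) as [E P].
    destruct (Hc _ _ _ Hq) as [H1 [H2 [H3 H4]]].
    replace (k + (k2 - k3))%Z with k1 by lia. replace (k2 - (k2 - k3))%Z with k3 by lia.
    repeat split; auto. replace (Aa al k1 - Aa al k - (m - Aa al k3 + Aa al k2)) with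
      (Aa al k1 - Aa al k2 + Aa al k3 - Aa al k - m) by ring. auto.
  - intros [[k k1] k3] [[k' k1'] k3'] Hq Hq' E1 E2.
    destruct (HQ _ _ _ _ Hq) as [E _]. destruct (HQ _ _ _ _ Hq') as [E' _].
    f_equal; [f_equal|]; lia.
Qed.

Lemma slice_k2_II : forall k2,
  (forall k k1 k3, Q k k1 k2 k3 -> In (k2 - k1)%Z vs /\ (k2 - k1 <> 0)%Z /\
     IZR (Z.abs k) <= R /\ IZR (Z.abs k3) <= R) ->
  card_le (fun q : Z * Z * Z => let '(k, k1, k3) := q in Q k k1 k2 k3) (sumR bnd vs).
Proof.
  intros k2 Hc.
  apply (slice_count _ (fun q => let '(_, k1, _) := q in (k2 - k1)%Z)
     (fun q => let '(k, _, _) := q in k) (fun v => v) (fun v => m - Aa al (k2 - v) + Aa al k2)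
     vs al C0 R Hal HC0 HR).
  - intros [[k k1] k3] Hq. destruct (HQ _ _ _ _ Hq) as [E P].
    destruct (Hc _ _ _ Hq) as [H1 [H2 [H3 H4]]].
    replace (k + (k2 - k1))%Z with k3 by lia. replace (k2 - (k2 - k1))%Z with k1 by lia.
    repeat split; auto. replace (Aa al k3 - Aa al k - (m - Aa al k1 + Aa al k2)) with
      (Aa al k1 - Aa al k2 + Aa al k3 - Aa al k - m) by ring. auto.
  - intros [[k k1] k3] [[k' k1'] k3'] Hq Hq' E1 E2.
    destruct (HQ _ _ _ _ Hq) as [E _]. destruct (HQ _ _ _ _ Hq') as [E' _].
    f_equal; [f_equal|]; lia.
Qed.

End Slices.

Lemma inB_Z : forall al C0 m N N1 N2 N3 j Gamma k k1 k2 k3,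
  inB al C0 m N N1 N2 N3 j Gamma k k1 k2 k3 ->
  (k = k1 - k2 + k3 /\ k2 <> k1 /\ k2 <> k3 /\ Z.abs k1 <= N1 /\ Z.abs k2 <= N2 /\
   Z.abs k3 <= N3 /\ Z.abs (sel3 j k1 k2 k3) <= Zfloor Gamma /\ Zfloor Gamma + 1 <= Z.abs k)%Z
  /\ Rabs (Aa al k1 - Aa al k2 + Aa al k3 - Aa al k - m) <= C0.
Proof.
  intros al C0 m N N1 N2 N3 j Gamma k k1 k2 k3 [[E [D1 [D2 [P [B0 [B1 [B2 B3]]]]]]] [G1 G2]].
  split; [|exact P].
  repeat split; auto.
  - apply Zfloor_le in G1. rewrite ZfloorZ in G1. exact G1.
  - pose proof (Zfloor_bound Gamma) as [F1 F2].
    assert (Zfloor Gamma < Z.abs k)%Z by (apply lt_IZR; lra). lia.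
Qed.

Lemma roles : forall (j : nat) N1 N2 N3, (j = 1%nat \/ j = 2%nat \/ j = 3%nat) ->
  sel3 j N1 N2 N3 = Nmax3 N1 N2 N3 -> (1 <= N1)%Z -> (1 <= N2)%Z -> (1 <= N3)%Z ->
  (j = 1%nat /\ N2 <= Nmed3 N1 N2 N3 /\ N3 <= Nmed3 N1 N2 N3)%Z \/
  (j = 2%nat /\ N1 <= Nmed3 N1 N2 N3 /\ N3 <= Nmed3 N1 N2 N3)%Z \/
  (j = 3%nat /\ N1 <= Nmed3 N1 N2 N3 /\ N2 <= Nmed3 N1 N2 N3)%Z.
Proof.
  intros j N1 N2 N3 [ -> | [ -> | -> ] ] H; simpl in H; unfold Nmed3, Nmax3, Nmin3 in *; lia.
Qed.

Lemma in_sym20 : forall M v, (0 <= M)%Z -> (Z.abs v <= 20 * M)%Z -> In v (symlist (Z.to_nat (20 * M))).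
Proof. intros. apply in_symlist. rewrite Z2Nat.id; lia. Qed.

Definition vsB (G M : Z) := zints (G - 4 * M) (Z.to_nat (8 * M + 1)) ++ zints (- (G + 4 * M)) (Z.to_nat (8 * M + 1)).

Lemma in_vsB : forall G M v, (0 <= M)%Z -> (G - 4 * M <= Z.abs v <= G + 4 * M)%Z -> In v (vsB G M).
Proof.
  intros G M v HM Hv. unfold vsB. apply in_app_iff. rewrite !in_zints. rewrite Z2Nat.id by lia. lia.
Qed.

Lemma length_vsB : forall G M, (0 <= M)%Z -> INR (length (vsB G M)) = 2 * (8 * IZR M + 1).
Proof.
  intros. unfold vsB, zints. rewrite length_app, !length_map, !length_seq, plus_INR.
  rewrite INR_IZR_INZ, Z2Nat.id by lia. rewrite plus_IZR, mult_IZR. ring.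
Qed.

Ltac obl := repeat split; first [ apply in_sym20; lia | apply in_vsB; lia | apply IZR_le; lia | lia ].

Theorem lemma2p11 :
  forall alpha C0 : R, 1 < alpha < 2 -> 0 < C0 ->
  exists C : R, 0 < C /\
  forall (N N1 N2 N3 : Z) (m Gamma : R) (jstar : nat),
    dyadic N -> dyadic N1 -> dyadic N2 -> dyadic N3 ->
    (1 <= N1 <= N)%Z -> (1 <= N2 <= N)%Z -> (1 <= N3 <= N)%Z ->
    (jstar = 1%nat \/ jstar = 2%nat \/ jstar = 3%nat) ->
    sel3 jstar N1 N2 N3 = Nmax3 N1 N2 N3 ->
    0 < Gamma ->
    let B := inB alpha C0 m N N1 N2 N3 jstar Gamma in
    let Nmed := IZR (Nmed3 N1 N2 N3) in
    let Nmin := IZR (Nmin3 N1 N2 N3) in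
    card_le (fun q : Z * Z * Z * Z => let '(k, k1, k2, k3) := q in B k k1 k2 k3)
      (C * Nmin * Nmed) /\
    (forall k : Z, card_le (fun q : Z * Z * Z => let '(k1, k2, k3) := q in B k k1 k2 k3)
      (C * Nmed)) /\
    (forall k1 : Z, card_le (fun q : Z * Z * Z => let '(k, k2, k3) := q in B k k1 k2 k3)
      (C * Nmed)) /\
    (forall k2 : Z, card_le (fun q : Z * Z * Z => let '(k, k1, k3) := q in B k k1 k2 k3)
      (C * Nmed)) /\
    (forall k3 : Z, card_le (fun q : Z * Z * Z => let '(k, k1, k2) := q in B k k1 k2 k3)
      (C * Nmed)) /\
    (forall k k2 : Z, card_le (fun q : Z * Z => let '(k1, k3) := q in B k k1 k2 k3)
      (C * Nmed)) /\
    (forall k1 k3 : Z, card_le (fun q : Z * Z => let '(k, k2) := q in B k k1 k2 k3)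
      (C * Nmed)).
Proof.
  intros al C0 Hal HC0.
  assert (Hk := kap_pos al Hal).
  assert (HKA : 0 < KA al C0).
  { unfold KA. assert (0 <= 80 * C0 / (kap al * (al - 1))).
    { unfold Rdiv. apply Rmult_le_pos. lra. left. apply Rinv_0_lt_compat. apply Rmult_lt_0_compat; lra. }
    lra. }
  assert (HKB : 0 < KB al C0).
  { unfold KB. assert (0 <= 8 * C0 / kap al).
    { unfold Rdiv. apply Rmult_le_pos. lra. left. apply Rinv_0_lt_compat. lra. }
    lra. }
  set (C1 := KA al C0 + KB al C0 + 20).
  exists (3 * C1). split. unfold C1; lra.
  intros N N1 N2 N3 m Gamma j _ _ _ _ HN1 HN2 HN3 Hj Hsel HGam B Nmed Nmin.
  set (M := Nmed3 N1 N2 N3) in *.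
  set (G := Zfloor Gamma).
  assert (HM : (1 <= M)%Z) by (unfold M, Nmed3, Nmax3, Nmin3; lia).
  assert (IM : 1 <= IZR M) by (apply IZR_le in HM; lra).
  assert (HG0 : (0 <= G)%Z).
  { unfold G. apply Zfloor_lub. lra. }
  assert (HQ : forall k k1 k2 k3, B k k1 k2 k3 -> k = (k1 - k2 + k3)%Z /\
     Rabs (Aa al k1 - Aa al k2 + Aa al k3 - Aa al k - m) <= C0).
  { intros k k1 k2 k3 Hb. destruct (inB_Z _ _ _ _ _ _ _ _ _ _ _ _ _ Hb) as [F P]. split; [tauto|auto]. }
  assert (HF : forall k k1 k2 k3, B k k1 k2 k3 ->
   (k = k1 - k2 + k3 /\ k2 <> k1 /\ k2 <> k3 /\ Z.abs k1 <= N1 /\ Z.abs k2 <= N2 /\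
   Z.abs k3 <= N3 /\ Z.abs (sel3 j k1 k2 k3) <= G /\ G + 1 <= Z.abs k)%Z).
  { intros k k1 k2 k3 Hb. destruct (inB_Z _ _ _ _ _ _ _ _ _ _ _ _ _ Hb) as [F P]. exact F. }
  assert (Hro := roles j N1 N2 N3 Hj Hsel ltac:(lia) ltac:(lia) ltac:(lia)). fold M in Hro.
  assert (R10 : 1 <= IZR (10 * M)) by (rewrite mult_IZR; lra).
  assert (RG : 1 <= IZR (G + 4 * M)) by (apply IZR_le; lia).
  assert (SA : sumR (fun v => 1 + 2 * C0 / (mu al (IZR (10 * M)) * IZR (Z.abs v)))
       (symlist (Z.to_nat (20 * M))) <= C1 * IZR M).
  { eapply Rle_trans. apply sumA; auto. unfold C1. nra. }
  assert (SB : (8 * M <= G)%Z -> sumR (fun v => 1 + 2 * C0 / (mu al (IZR (G + 4 * M)) * IZR (Z.abs v)))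
       (vsB G M) <= C1 * IZR M).
  { intros HGM. eapply Rle_trans. apply sumB; auto. unfold C1. nra. }
  assert (Sk : forall k, card_le (fun q : Z * Z * Z => let '(k1, k2, k3) := q in B k k1 k2 k3) (C1 * IZR M)).
  { intros k. destruct (Z_lt_le_dec G (8 * M)) as [Hs|Hl].
    - eapply card_le_weaken; [exact SA|].
      apply (slice_k_I al C0 m _ B _ Hal HC0 R10 HQ).
      intros k1 k2 k3 Hb. specialize (HF _ _ _ _ Hb).
      destruct Hro as [[-> [? ?]]|[[-> [? ?]]|[-> [? ?]]]]; simpl sel3 in HF; obl.
    - destruct Hro as [[-> [? ?]]|[[-> [? ?]]|[-> [? ?]]]].
      + eapply card_le_weaken; [exact SA|].
        apply (slice_k_I al C0 m _ B _ Hal HC0 R10 HQ).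
        intros k1 k2 k3 Hb. specialize (HF _ _ _ _ Hb). simpl sel3 in HF. obl.
      + eapply card_le_weaken; [exact (SB Hl)|].
        apply (slice_k_I al C0 m _ B _ Hal HC0 RG HQ).
        intros k1 k2 k3 Hb. specialize (HF _ _ _ _ Hb). simpl sel3 in HF. obl.
      + eapply card_le_weaken; [exact SA|].
        apply (slice_k_II al C0 m _ B _ Hal HC0 R10 HQ).
        intros k1 k2 k3 Hb. specialize (HF _ _ _ _ Hb). simpl sel3 in HF. obl. }
  assert (Sk1 : forall k1, card_le (fun q : Z * Z * Z => let '(k, k2, k3) := q in B k k1 k2 k3) (C1 * IZR M)).
  { intros k1. destruct (Z_lt_le_dec G (8 * M)) as [Hs|Hl].
    - eapply card_le_weaken; [exact SA|].
      apply (slice_k1_I al C0 m _ B _ Hal HC0 R10 HQ).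
      intros k k2 k3 Hb. specialize (HF _ _ _ _ Hb).
      destruct Hro as [[-> [? ?]]|[[-> [? ?]]|[-> [? ?]]]]; simpl sel3 in HF; obl.
    - destruct Hro as [[-> [? ?]]|[[-> [? ?]]|[-> [? ?]]]].
      + eapply card_le_weaken; [exact SA|].
        apply (slice_k1_I al C0 m _ B _ Hal HC0 R10 HQ).
        intros k k2 k3 Hb. specialize (HF _ _ _ _ Hb). simpl sel3 in HF. obl.
      + eapply card_le_weaken; [exact (SB Hl)|].
        apply (slice_k1_I al C0 m _ B _ Hal HC0 RG HQ).
        intros k k2 k3 Hb. specialize (HF _ _ _ _ Hb). simpl sel3 in HF. obl.
      + eapply card_le_weaken; [exact (SB Hl)|].
        apply (slice_k1_I al C0 m _ B _ Hal HC0 RG HQ).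
        intros k k2 k3 Hb. specialize (HF _ _ _ _ Hb). simpl sel3 in HF. obl. }
  assert (Sk3 : forall k3, card_le (fun q : Z * Z * Z => let '(k, k1, k2) := q in B k k1 k2 k3) (C1 * IZR M)).
  { intros k3. destruct (Z_lt_le_dec G (8 * M)) as [Hs|Hl].
    - eapply card_le_weaken; [exact SA|].
      apply (slice_k3_II al C0 m _ B _ Hal HC0 R10 HQ).
      intros k k1 k2 Hb. specialize (HF _ _ _ _ Hb).
      destruct Hro as [[-> [? ?]]|[[-> [? ?]]|[-> [? ?]]]]; simpl sel3 in HF; obl.
    - destruct Hro as [[-> [? ?]]|[[-> [? ?]]|[-> [? ?]]]].
      + eapply card_le_weaken; [exact (SB Hl)|].
        apply (slice_k3_II al C0 m _ B _ Hal HC0 RG HQ).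
        intros k k1 k2 Hb. specialize (HF _ _ _ _ Hb). simpl sel3 in HF. obl.
      + eapply card_le_weaken; [exact (SB Hl)|].
        apply (slice_k3_II al C0 m _ B _ Hal HC0 RG HQ).
        intros k k1 k2 Hb. specialize (HF _ _ _ _ Hb). simpl sel3 in HF. obl.
      + eapply card_le_weaken; [exact SA|].
        apply (slice_k3_II al C0 m _ B _ Hal HC0 R10 HQ).
        intros k k1 k2 Hb. specialize (HF _ _ _ _ Hb). simpl sel3 in HF. obl. }
  assert (Sk2 : forall k2, card_le (fun q : Z * Z * Z => let '(k, k1, k3) := q in B k k1 k2 k3) (C1 * IZR M)).
  { intros k2. destruct (Z_lt_le_dec G (8 * M)) as [Hs|Hl].
    - eapply card_le_weaken; [exact SA|].
      apply (slice_k2_I al C0 m _ B _ Hal HC0 R10 HQ).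
      intros k k1 k3 Hb. specialize (HF _ _ _ _ Hb).
      destruct Hro as [[-> [? ?]]|[[-> [? ?]]|[-> [? ?]]]]; simpl sel3 in HF; obl.
    - destruct Hro as [[-> [? ?]]|[[-> [? ?]]|[-> [? ?]]]].
      + eapply card_le_weaken; [exact (SB Hl)|].
        apply (slice_k2_II al C0 m _ B _ Hal HC0 RG HQ).
        intros k k1 k3 Hb. specialize (HF _ _ _ _ Hb). simpl sel3 in HF. obl.
      + eapply card_le_weaken; [exact (SB Hl)|].
        apply (slice_k2_I al C0 m _ B _ Hal HC0 RG HQ).
        intros k k1 k3 Hb. specialize (HF _ _ _ _ Hb). simpl sel3 in HF. obl.
      + eapply card_le_weaken; [exact (SB Hl)|].
        apply (slice_k2_I al C0 m _ B _ Hal HC0 RG HQ).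
        intros k k1 k3 Hb. specialize (HF _ _ _ _ Hb). simpl sel3 in HF. obl. }
  assert (C1ge : 20 <= C1) by (unfold C1; lra).
  assert (I3 : IZR (M - - M + 1) <= C1 * IZR M).
  { rewrite plus_IZR, minus_IZR, opp_IZR. nra. }
  split; [|split; [|split; [|split; [|split; [|split]]]]].
  - assert (TOT : forall (o : Z * Z * Z * Z -> Z) Ni, (1 <= Ni)%Z ->
       (forall q, (let '(k, k1, k2, k3) := q in B k k1 k2 k3) -> (Z.abs (o q) <= Ni)%Z) ->
       (forall v, card_le (fun q => (let '(k, k1, k2, k3) := q in B k k1 k2 k3) /\ o q = v) (C1 * IZR M)) ->
       card_le (fun q : Z * Z * Z * Z => let '(k, k1, k2, k3) := q in B k k1 k2 k3) (3 * C1 * IZR Ni * IZR M)).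
    { intros o Ni HNi Ho Hv.
      eapply card_le_weaken; [|apply (card_fiber _ o (zints (- Ni) (Z.to_nat (2 * Ni + 1))) (fun _ => C1 * IZR M))].
      - eapply Rle_trans. apply (sumR_le _ _ (C1 * IZR M)). intros; lra.
        unfold zints. rewrite length_map, length_seq, INR_IZR_INZ, Z2Nat.id by lia.
        rewrite plus_IZR, mult_IZR. apply IZR_le in HNi.
        assert (0 <= C1 * IZR M * (IZR Ni - 1)) by (apply Rmult_le_pos; [apply Rmult_le_pos|]; lra).
        nra.
      - intros q Hq. apply in_zints. specialize (Ho q Hq). rewrite Z2Nat.id by lia. lia.
      - exact Hv. }
    unfold Nmin, Nmed.
    destruct Hro as [[-> [? ?]]|[[-> [? ?]]|[-> [? ?]]]].
    + destruct (Z_le_gt_dec N2 N3).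
      * replace (Nmin3 N1 N2 N3) with N2 by (unfold Nmin3, Nmed3, Nmax3 in *; simpl in Hsel; lia).
        apply (TOT (fun q => let '(_, _, k2, _) := q in k2)). lia.
        { intros [[[k k1] k2] k3] Hb. specialize (HF _ _ _ _ Hb). lia. }
        intros v. eapply (card_le_inj _ _ (fun q => let '(k, k1, _, k3) := q in (k, k1, k3))); [| |exact (Sk2 v)].
        { intros [[[k k1] k2] k3] [Hb Ev]. simpl in Ev. subst. exact Hb. }
        { intros [[[k k1] k2] k3] [[[k' k1'] k2'] k3'] [_ E] [_ E'] Heq. simpl in *.
          inversion Heq. subst. reflexivity. }
      * replace (Nmin3 N1 N2 N3) with N3 by (unfold Nmin3, Nmed3, Nmax3 in *; simpl in Hsel; lia).
        apply (TOT (fun q => let '(_, _, _, k3) := q in k3)). lia.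
        { intros [[[k k1] k2] k3] Hb. specialize (HF _ _ _ _ Hb). lia. }
        intros v. eapply (card_le_inj _ _ (fun q => let '(k, k1, k2, _) := q in (k, k1, k2))); [| |exact (Sk3 v)].
        { intros [[[k k1] k2] k3] [Hb Ev]. simpl in Ev. subst. exact Hb. }
        { intros [[[k k1] k2] k3] [[[k' k1'] k2'] k3'] [_ E] [_ E'] Heq. simpl in *.
          inversion Heq. subst. reflexivity. }
    + destruct (Z_le_gt_dec N1 N3).
      * replace (Nmin3 N1 N2 N3) with N1 by (unfold Nmin3, Nmed3, Nmax3 in *; simpl in Hsel; lia).
        apply (TOT (fun q => let '(_, k1, _, _) := q in k1)). lia.
        { intros [[[k k1] k2] k3] Hb. specialize (HF _ _ _ _ Hb). lia. }
        intros v. eapply (card_le_inj _ _ (fun q => let '(k, _, k2, k3) := q in (k, k2, k3))); [| |exact (Sk1 v)].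
        { intros [[[k k1] k2] k3] [Hb Ev]. simpl in Ev. subst. exact Hb. }
        { intros [[[k k1] k2] k3] [[[k' k1'] k2'] k3'] [_ E] [_ E'] Heq. simpl in *.
          inversion Heq. subst. reflexivity. }
      * replace (Nmin3 N1 N2 N3) with N3 by (unfold Nmin3, Nmed3, Nmax3 in *; simpl in Hsel; lia).
        apply (TOT (fun q => let '(_, _, _, k3) := q in k3)). lia.
        { intros [[[k k1] k2] k3] Hb. specialize (HF _ _ _ _ Hb). lia. }
        intros v. eapply (card_le_inj _ _ (fun q => let '(k, k1, k2, _) := q in (k, k1, k2))); [| |exact (Sk3 v)].
        { intros [[[k k1] k2] k3] [Hb Ev]. simpl in Ev. subst. exact Hb. }
        { intros [[[k k1] k2] k3] [[[k' k1'] k2'] k3'] [_ E] [_ E'] Heq. simpl in *.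
          inversion Heq. subst. reflexivity. }
    + destruct (Z_le_gt_dec N1 N2).
      * replace (Nmin3 N1 N2 N3) with N1 by (unfold Nmin3, Nmed3, Nmax3 in *; simpl in Hsel; lia).
        apply (TOT (fun q => let '(_, k1, _, _) := q in k1)). lia.
        { intros [[[k k1] k2] k3] Hb. specialize (HF _ _ _ _ Hb). lia. }
        intros v. eapply (card_le_inj _ _ (fun q => let '(k, _, k2, k3) := q in (k, k2, k3))); [| |exact (Sk1 v)].
        { intros [[[k k1] k2] k3] [Hb Ev]. simpl in Ev. subst. exact Hb. }
        { intros [[[k k1] k2] k3] [[[k' k1'] k2'] k3'] [_ E] [_ E'] Heq. simpl in *.
          inversion Heq. subst. reflexivity. }
      * replace (Nmin3 N1 N2 N3) with N2 by (unfold Nmin3, Nmed3, Nmax3 in *; simpl in Hsel; lia).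
        apply (TOT (fun q => let '(_, _, k2, _) := q in k2)). lia.
        { intros [[[k k1] k2] k3] Hb. specialize (HF _ _ _ _ Hb). lia. }
        intros v. eapply (card_le_inj _ _ (fun q => let '(k, k1, _, k3) := q in (k, k1, k3))); [| |exact (Sk2 v)].
        { intros [[[k k1] k2] k3] [Hb Ev]. simpl in Ev. subst. exact Hb. }
        { intros [[[k k1] k2] k3] [[[k' k1'] k2'] k3'] [_ E] [_ E'] Heq. simpl in *.
          inversion Heq. subst. reflexivity. }
  - intros k. eapply card_le_weaken; [|apply Sk]. unfold Nmed. nra.
  - intros k. eapply card_le_weaken; [|apply Sk1]. unfold Nmed. nra.
  - intros k. eapply card_le_weaken; [|apply Sk2]. unfold Nmed. nra.
  - intros k. eapply card_le_weaken; [|apply Sk3]. unfold Nmed. nra.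
  - intros k k2. eapply card_le_weaken with (b := C1 * IZR M); [unfold Nmed; nra|].
    eapply card_le_weaken; [exact I3|].
    destruct Hro as [[-> [? ?]]|[[-> [? ?]]|[-> [? ?]]]].
    + eapply (card_le_inj _ _ (fun q : Z * Z => let '(_, k3) := q in k3)); [| |apply card_le_interval; lia].
      * intros [k1 k3] Hb. specialize (HF _ _ _ _ Hb). lia.
      * intros [k1 k3] [k1' k3'] Hb Hb' E. simpl in E. subst.
        destruct (HF _ _ _ _ Hb) as [E1 _]. destruct (HF _ _ _ _ Hb') as [E2 _]. f_equal; lia.
    + eapply (card_le_inj _ _ (fun q : Z * Z => let '(k1, _) := q in k1)); [| |apply card_le_interval; lia].
      * intros [k1 k3] Hb. specialize (HF _ _ _ _ Hb). lia.
      * intros [k1 k3] [k1' k3'] Hb Hb' E. simpl in E. subst.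
        destruct (HF _ _ _ _ Hb) as [E1 _]. destruct (HF _ _ _ _ Hb') as [E2 _]. f_equal; lia.
    + eapply (card_le_inj _ _ (fun q : Z * Z => let '(k1, _) := q in k1)); [| |apply card_le_interval; lia].
      * intros [k1 k3] Hb. specialize (HF _ _ _ _ Hb). lia.
      * intros [k1 k3] [k1' k3'] Hb Hb' E. simpl in E. subst.
        destruct (HF _ _ _ _ Hb) as [E1 _]. destruct (HF _ _ _ _ Hb') as [E2 _]. f_equal; lia.
  - intros k1 k3. eapply card_le_weaken with (b := C1 * IZR M); [unfold Nmed; nra|].
    destruct Hro as [[-> [? ?]]|[[-> [? ?]]|[-> [? ?]]]].
    + eapply card_le_weaken; [exact I3|].
      eapply (card_le_inj _ _ (fun q : Z * Z => let '(_, k2) := q in k2)); [| |apply card_le_interval; lia].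
      * intros [k k2] Hb. specialize (HF _ _ _ _ Hb). lia.
      * intros [k k2] [k' k2'] Hb Hb' E. simpl in E. subst.
        destruct (HF _ _ _ _ Hb) as [E1 _]. destruct (HF _ _ _ _ Hb') as [E2 _]. f_equal; lia.
    + destruct (Z_lt_le_dec G (8 * M)) as [Hs|Hl].
      * eapply card_le_weaken with (b := IZR (G - - G + 1)).
        { rewrite plus_IZR, minus_IZR, opp_IZR.
          assert (IZR (G + 1) <= IZR (8 * M)) by (apply IZR_le; lia). rewrite plus_IZR, mult_IZR in H1. nra. }
        eapply (card_le_inj _ _ (fun q : Z * Z => let '(_, k2) := q in k2)); [| |apply card_le_interval; lia].
        -- intros [k k2] Hb. specialize (HF _ _ _ _ Hb). simpl sel3 in HF. lia.
        -- intros [k k2] [k' k2'] Hb Hb' E. simpl in E. subst.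
           destruct (HF _ _ _ _ Hb) as [E1 _]. destruct (HF _ _ _ _ Hb') as [E2 _]. f_equal; lia.
      * eapply card_le_weaken with (b := INR (length (vsB G M))).
        { rewrite length_vsB by lia. nra. }
        eapply (card_le_inj _ _ (fun q : Z * Z => let '(_, k2) := q in k2)); [| |apply card_le_list].
        -- intros [k k2] Hb. specialize (HF _ _ _ _ Hb). simpl sel3 in HF. simpl. apply in_vsB; lia.
        -- intros [k k2] [k' k2'] Hb Hb' E. simpl in E. subst.
           destruct (HF _ _ _ _ Hb) as [E1 _]. destruct (HF _ _ _ _ Hb') as [E2 _]. f_equal; lia.
    + eapply card_le_weaken; [exact I3|].
      eapply (card_le_inj _ _ (fun q : Z * Z => let '(_, k2) := q in k2)); [| |apply card_le_interval; lia].
      * intros [k k2] Hb. specialize (HF _ _ _ _ Hb). lia.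
      * intros [k k2] [k' k2'] Hb Hb' E. simpl in E. subst.
        destruct (HF _ _ _ _ Hb) as [E1 _]. destruct (HF _ _ _ _ Hb') as [E2 _]. f_equal; lia.
Qed.
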